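(* (a) Let $p$ be a prime and let $W\subset \mathbb{Z}_p$ be a nonempty set of residues with \[ |W| < \frac{p-1}{2} - \frac{\log p}{\log (4/3)}. \] Then there exist sets $U,V\subset\mathbb{Z}_p$ forming a prime-compatible pair modulo $p$ with $W\subset U$ and $W\subset V$. (b) Let $p\ge 7$ be a prime. Then there exist sets $U,V\subset\mathbb{Z}_p$ forming a prime-compatible pair modulo $p$ such that the residues of $1$ and $11$ lie in $U\setminus V$, the residue of $6$ lies in $V\setminus U$, and $|U\cap V|=2$.
   Context: $\mathbb{Z}_p$ denotes the integers modulo $p$ and $\mathbb{Z}_p^*$ its nonzero residues. For a prime $p$ and nonempty sets $U,V\subset\mathbb{Z}_p$, the pair $U,V$ is called a prime-compatible pair (modulo $p$) if $(U\setminus V)-(V\setminus U)=\{u-v: u\in U\setminus V,\ v\in V\setminus U\}$ equals $\mathbb{Z}_p^*$. *)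

(* Defs.v *)
From mathcomp Require Import all_boot all_order all_algebra.
From Stdlib Require Import Reals.
Set Implicit Arguments. Unset Strict Implicit. Unset Printing Implicit Defensive.
Import GRing.Theory.
Local Open Scope ring_scope.

Definition diffset (p : nat) (U V : {set 'F_p}) : {set 'F_p} :=
  [set u - v | u in U :\: V, v in V :\: U].

Definition prime_compatible (p : nat) (U V : {set 'F_p}) : Prop :=
  U != set0 /\ V != set0 /\ diffset U V = [set x : 'F_p | x != 0].

(* Main.v *)
Require Import Defs.
From mathcomp Require Import zify.
From mathcomp Require Import all_boot all_order all_algebra.
From Stdlib Require Import Reals.
From Stdlib Require Import Lra.
Import GRing.Theory.
Local Open Scope ring_scope.
Delimit Scope ring_scope with ring.

Lemma construct (p : nat) (W : {set 'F_p}) (f : 'F_p -> bool) :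
  W != set0 ->
  (forall d : 'F_p, d != 0 -> exists x, [/\ x \notin W, x - d \notin W, f x & ~~ f (x - d)]) ->
  let A := [set x | (x \notin W) && f x] in
  let B := [set x | (x \notin W) && ~~ f x] in
  [/\ prime_compatible (A :|: W) (B :|: W), (A :|: W) :\: (B :|: W) = A,
      (B :|: W) :\: (A :|: W) = B & (A :|: W) :&: (B :|: W) = W].
Proof.
move=> W0 Hd A B.
have eUV : (A :|: W) :\: (B :|: W) = A.
  by apply/setP=> x; rewrite !inE; case: (x \in W); case: (f x).
have eVU : (B :|: W) :\: (A :|: W) = B.
  by apply/setP=> x; rewrite !inE; case: (x \in W); case: (f x).
have eI : (A :|: W) :&: (B :|: W) = W.
  by apply/setP=> x; rewrite !inE; case: (x \in W); case: (f x).
split => //; case/set0Pn: (W0) => w hw.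
split; [|split].
- by apply/set0Pn; exists w; rewrite inE hw orbT.
- by apply/set0Pn; exists w; rewrite inE hw orbT.
- rewrite /diffset eUV eVU; apply/setP => d; rewrite inE; apply/idP/idP.
  + case/imset2P=> x y; rewrite !inE => /andP[_ fx] /andP[_ fy] ->.
    by rewrite subr_eq0; apply: contraNneq fy => <-; rewrite fx.
  + move=> /Hd [x [xW xdW fx fxd]].
    have -> : d = x - (x - d) by rewrite opprB addrC subrK.
    by apply: imset2_f; rewrite inE ?xW ?fx ?xdW ?fxd.
Qed.

Lemma pow_bound t : (14 <= t -> (2 * t + 9) * expn 3 t < expn 4 t)%nat.
Proof.
elim: t => // t IH; rewrite leq_eqVlt => /orP[/eqP <- | h]; first lia.
have := IH h; rewrite !expnS; nia.
Qed.

Section RealPart.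
Local Open Scope R_scope.

Lemma INR_expn a t : INR (expn a t) = INR a ^ t.
Proof.
elim: t => [|t IH]; first by rewrite expn0.
rewrite expnS /=; change (INR (Nat.mul a (expn a t)) = INR a * INR a ^ t).
by rewrite mult_INR IH.
Qed.

Lemma real_bound (p m : nat) : (2 <= p)%nat ->
  Rlt (INR m) (Rminus (Rdiv (Rminus (INR p) (IZR 1)) (IZR 2)) (Rdiv (ln (INR p)) (ln (Rdiv (IZR 4) (IZR 3))))) ->
  (2 * m < p)%nat /\ (p.-1 * expn 3 ((p - 2 * m) %/ 2) < expn 4 ((p - 2 * m) %/ 2))%nat.
Proof.
move=> p2 H.
set t := ((p - 2 * m) %/ 2)%nat.
have l43 : 0 < ln (4 / 3).
  rewrite -ln_1; apply: ln_increasing; lra.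
have p2R : 2 <= INR p by have := le_INR 2 p (elimT leP p2).
have lp : 0 < ln (INR p) by rewrite -ln_1; apply: ln_increasing; lra.
have L0 : 0 < ln (INR p) / ln (4 / 3) by apply: Rdiv_lt_0_compat.
have m2 : (2 * m < p)%nat.
  apply/ltP; apply: INR_lt; rewrite -multE mult_INR /=; lra.
split => //.
have tp : (p <= 2 * t + 1 + 2 * m)%nat by rewrite /t; lia.
have tR : INR p <= 2 * INR t + 1 + 2 * INR m.
  have := le_INR _ _ (elimT leP tp); rewrite -!plusE -!multE !plus_INR /=; lra.
have Lt : ln (INR p) / ln (4 / 3) < INR t by lra.
have lt : ln (INR p) < ln ((4 / 3) ^ t).
  rewrite ln_pow; last lra.
  have := Rmult_lt_compat_r _ _ _ l43 Lt.
  have -> : ln (INR p) / ln (4 / 3) * ln (4 / 3) = ln (INR p) by field; lra.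
  done.
have pt : INR p < (4 / 3) ^ t by apply: ln_lt_inv => //; [lra | apply: pow_lt; lra].
have e4 : (4 / 3) ^ t * 3 ^ t = 4 ^ t.
  by rewrite -Rpow_mult_distr; f_equal; field.
have h3 : 0 < 3 ^ t by apply: pow_lt; lra.
have key : INR (p * expn 3 t) < INR (expn 4 t).
  rewrite -multE mult_INR !INR_expn.
  have -> : INR 3 = 3 by simpl; lra.
  have -> : INR 4 = 4 by simpl; lra.
  rewrite -e4.
  by apply: Rmult_lt_compat_r.
have := INR_lt _ _ key => /ltP h.
apply: leq_ltn_trans h; rewrite leq_mul2r; apply/orP; right; exact: leq_pred.
Qed.
End RealPart.

Lemma arith1 n a b : (2 * n.+1 <= a + 1 -> a <= b + 2 -> 2 * n <= b + 1)%nat.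
Proof. lia. Qed.

Lemma arith2 (c i u p : nat) : (u <= p -> u + i = c + c -> 2 * c <= i + p)%nat.
Proof. lia. Qed.

Lemma arith3 (t c s p : nat) : (2 * t <= 2 * c - p + 1 -> 2 * c <= s + p -> 2 * t <= s + 1)%nat.
Proof. lia. Qed.

Section Fp.
Variable p : nat.
Hypothesis hp : prime p.

Lemma valF (x : 'F_p) : (val x)%:R = x.
Proof.
apply: val_inj; rewrite /= val_Fp_nat // modn_small //.
by apply: leq_trans (ltn_ord x) _; rewrite Fp_cast.
Qed.

Lemma valF_lt (x : 'F_p) : (val x < p)%nat.
Proof. by apply: leq_trans (ltn_ord x) _; rewrite Fp_cast. Qed.

Lemma valFn (n : nat) : val (n%:R : 'F_p) = (n %% p)%nat.
Proof. exact: val_Fp_nat. Qed.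

Lemma eqF (x : 'F_p) (n : nat) : (n < p)%nat -> (x == n%:R) = (val x == n).
Proof. by move=> np; rewrite -val_eqE /= valFn modn_small. Qed.

Lemma small_case (la : seq nat) (w1 w2 : nat) :
  (w1 < p)%nat -> (w2 < p)%nat -> w1 != w2 ->
  all (fun k => has (fun j => [&& j \notin la, j != w1, j != w2,
      ((j+k) %% p \in la), ((j+k) %% p != w1) & ((j+k) %% p != w2)]%nat) (iota 0 p)) (iota 1 p.-1) ->
  all (fun n => [&& (n %% p != w1), (n %% p != w2) & ((n %% p \in la) == (n != 6))]%nat) [:: 1; 11; 6]%nat ->
  exists U V : {set 'F_p},
       [/\ prime_compatible U V,
           (1%:R : 'F_p) \in U :\: V, (11%:R : 'F_p) \in U :\: V,
           (6%:R : 'F_p) \in V :\: U & #|U :&: V| = 2%nat].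
Proof.
move=> w1p w2p w12 Hall Hf.
set W : {set 'F_p} := [set w1%:R; w2%:R].
have inW x : (x \in W) = (val x == w1) || (val x == w2).
  by rewrite !inE !eqF.
have W0 : W != set0 by apply/set0Pn; exists w1%:R; rewrite !inE eqxx.
have [] := @construct p W (fun x => val x \in la) W0.
  move=> d d0; have dp := valF_lt d.
  have : (val d \in iota 1 p.-1).
    rewrite mem_iota; apply/andP; split; first by rewrite lt0n; apply: contraNneq d0 => h; rewrite -val_eqE h.
    by rewrite add1n prednK ?prime_gt0.
  move/(allP Hall)/hasP => [j]; rewrite mem_iota add0n => jp.
  case/and5P => jla jw1 jw2 jkla /andP[jk1 jk2].
  exists ((j + val d)%:R); rewrite !inW !valFn.
  have -> : (j + val d)%:R - d = j%:R :> 'F_p by rewrite natrD valF addrK.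
  by rewrite valFn (modn_small jp) (negbTE jw1) (negbTE jw2) (negbTE jk1) (negbTE jk2) jkla jla.
move=> pc e1 e2 eI; do 2 eexists; split; first exact: pc.
- rewrite e1 inE inW !valFn negb_or; by case/and4P: Hf => /and3P[-> -> /eqP ->].
- rewrite e1 inE inW !valFn negb_or; by case/and4P: Hf => _ /and3P[-> -> /eqP ->].
- rewrite e2 inE inW !valFn negb_or; by case/and4P: Hf => _ _ /and3P[-> -> /eqP ->].
- by rewrite eI cards2 eqF // valFn (modn_small w1p) w12.
Qed.

Definition flipf (z : 'F_p) (f : {ffun 'F_p -> bool}) : {ffun 'F_p -> bool} :=
  [ffun w => if w == z then ~~ f w else f w].

Lemma flipfK z : involutive (flipf z).
Proof.
move=> f; apply/ffunP => w; rewrite !ffunE.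
by case: (w == z) => //; rewrite negbK.
Qed.

Lemma flip_count (x y : 'F_p) (Q : {ffun 'F_p -> bool} -> bool) :
  x != y ->
  (forall f g : {ffun 'F_p -> bool}, (forall z, z != x -> z != y -> f z = g z) -> Q f = Q g) ->
  ((\sum_(f : {ffun 'F_p -> bool}) (Q f && ~~ (f x && ~~ f y))) * 4 =
    3 * \sum_(f : {ffun 'F_p -> bool}) Q f)%nat.
Proof.
move=> xy HQ.
pose N a b := (\sum_(f : {ffun 'F_p -> bool}) (Q f && (f x == a) && (f y == b)))%nat.
have Nx a b : N (~~ a) b = N a b.
  rewrite /N (reindex_inj (can_inj (flipfK x))); apply: eq_bigr => f _.
  rewrite (HQ (flipf x f) f); last by move=> z zx _; rewrite ffunE (negbTE zx).
  have yx : (y == x) = false by rewrite eq_sym (negbTE xy).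
  rewrite !ffunE eqxx yx.
  by case: (f x); case: a.
have Ny a b : N a (~~ b) = N a b.
  rewrite /N (reindex_inj (can_inj (flipfK y))); apply: eq_bigr => f _.
  rewrite (HQ (flipf y f) f); last by move=> z _ zy; rewrite ffunE (negbTE zy).
  rewrite !ffunE eqxx (negbTE xy).
  by case: (f y); case: b.
have N0 a b : N a b = N false false.
  by case: a; case: b; rewrite ?(Nx false) ?(Ny _ false) ?(Nx false).
have E1 : (\sum_(f : {ffun 'F_p -> bool}) Q f =
   \sum_(f : {ffun 'F_p -> bool}) (Q f && (f x == true) && (f y == true)) +
   \sum_(f : {ffun 'F_p -> bool}) (Q f && (f x == true) && (f y == false)) +
   \sum_(f : {ffun 'F_p -> bool}) (Q f && (f x == false) && (f y == true)) +
   \sum_(f : {ffun 'F_p -> bool}) (Q f && (f x == false) && (f y == false)))%nat.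
  rewrite -!big_split; apply: eq_bigr => f _ /=.
  by case: (Q f); case: (f x); case: (f y).
have E2 : (\sum_(f : {ffun 'F_p -> bool}) (Q f && ~~ (f x && ~~ f y)) =
   \sum_(f : {ffun 'F_p -> bool}) (Q f && (f x == true) && (f y == true)) +
   \sum_(f : {ffun 'F_p -> bool}) (Q f && (f x == false) && (f y == true)) +
   \sum_(f : {ffun 'F_p -> bool}) (Q f && (f x == false) && (f y == false)))%nat.
  rewrite -!big_split; apply: eq_bigr => f _ /=.
  by case: (Q f); case: (f x); case: (f y).
rewrite E1 E2.
have := N0 true true; have := N0 true false; have := N0 false true.
rewrite /N => -> -> ->.
by rewrite mulnC !mulSn mul0n !addnA addn0.
Qed.

Lemma exists_end (d : 'F_p) (S : {set 'F_p}) :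
  d != 0 -> S != set0 -> S != setT -> exists x, x \in S /\ x + d \notin S.
Proof.
move=> d0 S0 ST.
have [x /andP[xS xdS] | H] := pickP [pred x | (x \in S) && (x + d \notin S)].
  by exists x.
case/set0Pn: S0 => y yS.
have [z zS] : exists z, z \notin S.
  apply/existsP; move: ST; apply: contraR; rewrite negb_exists => /forallP h.
  by apply/eqP/setP => z; rewrite inE; move: (h z); rewrite negbK.
have Hk k : y + d *+ k \in S.
  elim: k => [|k IH]; first by rewrite mulr0n addr0.
  move: (H (y + d *+ k)) => /=; rewrite IH /= => /negbT; rewrite negbK.
  by rewrite mulrS addrCA addrC.
have : y + d *+ (val ((z - y) / d)) = z.
  by rewrite -mulr_natr valF mulrC divfK // addrC subrK.
by move=> e; move: (Hk (val ((z - y) / d))); rewrite e (negbTE zS).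
Qed.

Lemma bad_count (d : 'F_p) (R : pred {ffun 'F_p -> bool}) (F : {set 'F_p}) :
  d != 0 ->
  (forall f g : {ffun 'F_p -> bool}, (forall z, z \in F -> f z = g z) -> R f = R g) ->
  forall n (S : {set 'F_p}), S != setT -> [disjoint S & F] ->
  (forall x, x \in S -> x - d \notin F) -> (2 * n <= #|S| + 1)%nat ->
  ((\sum_(f : {ffun 'F_p -> bool}) (R f && [forall (x | x \in S), ~~ (f x && ~~ f (x - d)%ring)]))
     * expn 4 n <= expn 3 n * \sum_(f : {ffun 'F_p -> bool}) R f)%nat.
Proof.
move=> d0 HR; elim=> [|n IH] S ST SF SdF Sn.
  rewrite !expn0 muln1 mul1n; apply: leq_sum => f _.
  by case: (R f) => //=; rewrite leq_b1.
have S0 : S != set0.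
  by apply: contraTneq Sn => ->; rewrite cards0; lia.
have [x [xS xdS]] := @exists_end d S d0 S0 ST.
set S' := S :\ x :\ (x - d).
have xF : x \notin F by rewrite (disjointFr SF xS).
have xdF : x - d \notin F by apply: SdF.
have xxd : x != x - d.
  by apply: contra d0 => /eqP h; rewrite -(subrr x) {2}h opprB addrC subrK.
have S'T : S' != setT.
  apply/negP => /eqP h; have : x \in S' by rewrite h inE.
  by rewrite !inE eqxx /= ?andbF.
have S'F : [disjoint S' & F].
  apply: (disjointWl _ SF); by apply/subsetP => z; rewrite !inE => /and3P[].
have S'dF : forall z, z \in S' -> z - d \notin F.
  by move=> z; rewrite !inE => /and3P[_ _ /SdF].
have cS' : (#|S| <= #|S'| + 2)%nat.
  have sub : S \subset x |: ((x - d) |: S').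
    by apply/subsetP => z zS; rewrite !inE zS; case: (z == x); case: (z == x - d).
  have := subset_leq_card sub; rewrite !cardsU1.
  move=> h; apply: leq_trans h _; rewrite addnA addnC leq_add2l; by case: (_ \notin _); case: (_ \notin _).
have Sn' : (2 * n <= #|S'| + 1)%nat.
  exact: arith1 Sn cS'.
have IHS' := IH S' S'T S'F S'dF Sn'.
pose Q f := R f && [forall (z | z \in S'), ~~ (f z && ~~ f (z - d))].
have HQ : forall f g : {ffun 'F_p -> bool}, (forall z, z != x -> z != x - d -> f z = g z) -> Q f = Q g.
  move=> f g fg; rewrite /Q (HR f g); last first.
    move=> z zF; apply: fg; first by apply: contraNneq xF => <-.
    by apply: contraNneq xdF => <-.
  congr andb; apply: eq_forallb => z; case zS': (z \in S') => //=.
  move: zS'; rewrite !inE => /and3P[zxd zx zS].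
  rewrite !fg //.
    by apply: contraNneq xdS => <-; rewrite subrK.
  by apply: contraNneq zx => /addIr ->.
have FC := @flip_count x (x - d) Q xxd HQ.
apply: (@leq_trans ((\sum_(f : {ffun 'F_p -> bool}) (Q f && ~~ (f x && ~~ f (x - d)%ring))) * expn 4 n.+1)%nat).
  rewrite leq_mul2r; apply/orP; right; apply: leq_sum => f _.
  case Rf: (R f) => //=; case Hf: [forall (z | z \in S), ~~ (f z && ~~ f (z - d))] => //=.
  rewrite /Q Rf /=.
  have -> : [forall (z | z \in S'), ~~ (f z && ~~ f (z - d))].
    apply/forall_inP => z; rewrite !inE => /and3P[_ _ zS].
    by move/forall_inP: Hf => /(_ z zS).
  by move/forall_inP: Hf => /(_ x xS) ->.
rewrite !expnS mulnA FC -!mulnA leq_mul2l /=; exact: IHS'.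
Qed.

Lemma card_S (C : {set 'F_p}) (d : 'F_p) :
  (2 * #|C| <= #|[set x in C | (x - d)%ring \in C]| + p)%nat.
Proof.
have e : [set x in C | x - d \in C] = C :&: ((fun x => x - d) @^-1: C).
  by apply/setP => x; rewrite !inE.
have cD : #|(fun x => x - d) @^-1: C| = #|C| by apply: card_preimset; exact: addIr.
have := cardsUI C ((fun x => x - d) @^-1: C).
have := max_card (mem (C :|: (fun x => x - d) @^-1: C)).
rewrite card_Fp // e cD.
exact: arith2.
Qed.

Lemma exists_good (R : pred {ffun 'F_p -> bool}) (F C : {set 'F_p}) t :
  (forall f g : {ffun 'F_p -> bool}, (forall z, z \in F -> f z = g z) -> R f = R g) ->
  [disjoint C & F] -> C != setT ->
  (0 < \sum_(f : {ffun 'F_p -> bool}) R f)%nat ->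
  (p.-1 * expn 3 t < expn 4 t)%nat -> (2 * t <= 2 * #|C| - p + 1)%nat ->
  exists f : {ffun 'F_p -> bool}, R f /\
    forall d : 'F_p, d != 0 -> exists x, [/\ x \in C, x - d \in C, f x & ~~ f (x - d)].
Proof.
move=> HR CF CT R0 Ht Hc.
pose G (f : {ffun 'F_p -> bool}) := [forall d, (d != 0) ==>
   [exists x, [&& x \in C, x - d \in C, f x & ~~ f (x - d)]]].
have [f /andP[Rf Gf] | H] := pickP [pred f | R f && G f].
  exists f; split => // d d0.
  move/forallP: Gf => /(_ d); rewrite d0 /= => /existsP[x /and4P[? ? ? ?]].
  by exists x.
pose Bad d (f : {ffun 'F_p -> bool}) :=
  R f && [forall (x | x \in [set x in C | x - d \in C]), ~~ (f x && ~~ f (x - d))].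
have H1 : (\sum_(f : {ffun 'F_p -> bool}) R f <=
    \sum_(f : {ffun 'F_p -> bool}) \sum_(d : 'F_p | d != 0%ring) Bad d f)%nat.
  apply: leq_sum => f _; case Rf: (R f) => //.
  have := H f; rewrite /= Rf /= /G => /negbT; rewrite negb_forall => /existsP[d].
  rewrite negb_imply => /andP[d0]; rewrite negb_exists => /forallP Hx.
  rewrite (bigD1 d) //=.
  have -> : Bad d f = true.
    rewrite /Bad Rf /=; apply/forall_inP => x; rewrite inE => /andP[xC xdC].
    by move: (Hx x); rewrite xC xdC.
  by rewrite add1n.
rewrite exchange_big /= in H1.
have H2 : forall d : 'F_p, d != 0 ->
    ((\sum_(f : {ffun 'F_p -> bool}) Bad d f) * expn 4 t <= expn 3 t * \sum_(f : {ffun 'F_p -> bool}) R f)%nat.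
  move=> d d0; apply: (@bad_count d R F d0 HR t).
  - apply/negP => /eqP h; move/negP: CT; apply; apply/eqP/setP => z; rewrite inE.
    have : z \in [set x in C | x - d \in C] by rewrite h inE.
    by rewrite inE => /andP[].
  - by apply: (disjointWl _ CF); apply/subsetP => z; rewrite inE => /andP[].
  - by move=> x; rewrite inE => /andP[_ xdC]; rewrite (disjointFr CF xdC).
  - exact: arith3 Hc (card_S C d).
have H3 : ((\sum_(f : {ffun 'F_p -> bool}) R f) * expn 4 t <=
    (p.-1 * expn 3 t) * \sum_(f : {ffun 'F_p -> bool}) R f)%nat.
  apply: leq_trans (leq_mul H1 (leqnn _)) _.
  rewrite big_distrl /=.
  apply: (@leq_trans (\sum_(d : 'F_p | d != 0%ring) (expn 3 t * \sum_(f : {ffun 'F_p -> bool}) R f))%nat).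
    by apply: leq_sum => d d0; exact: H2.
  by rewrite sum_nat_const cardC1 card_Fp // mulnA.
move: H3; rewrite [X in (_ <= X)%nat]mulnC leq_pmul2l //.
by rewrite leqNgt Ht.
Qed.
End Fp.


Lemma arith4 p m : (2 * m < p -> 2 * ((p - 2 * m) %/ 2) <= 2 * (p - m) - p + 1)%nat.
Proof. lia. Qed.

Lemma arith5 p : (37 <= p -> 14 <= (p - 9) %/ 2 /\ p.-1 <= 2 * ((p - 9) %/ 2) + 9)%nat.
Proof. lia. Qed.

Lemma arith6 p c k : (37 <= p -> k <= 5 -> c = p - k -> 2 * ((p - 9) %/ 2) <= 2 * c - p + 1)%nat.
Proof. lia. Qed.

Lemma neqF p (hp : prime p) a b : (a < p)%nat -> (b < p)%nat -> a != b -> (a%:R : 'F_p) != b%:R.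
Proof.
move=> ap bp ab; rewrite (@eqF p hp) //.
rewrite (@valFn p hp).
by rewrite (modn_small ap).
Qed.

Lemma partA (p : nat) (W : {set 'F_p}) : prime p -> W != set0 ->
     Rlt (INR #|W|) (Rminus (Rdiv (Rminus (INR p) (IZR 1)) (IZR 2)) (Rdiv (ln (INR p)) (ln (Rdiv (IZR 4) (IZR 3))))) ->
     exists U V : {set 'F_p},
       prime_compatible U V /\ W \subset U /\ W \subset V.
Proof.
move=> hp W0 H.
have [m2 Ht] := @real_bound p #|W| (prime_gt1 hp) H.
have cC : #|~: W| = (p - #|W|)%nat by rewrite cardsCs setCK card_Fp.
have [f [_ Hf]] := @exists_good p hp (fun _ => true) set0 (~: W) ((p - 2 * #|W|) %/ 2)%nat
   (fun _ _ _ => erefl) ltac:(by rewrite disjoints_subset setC0 subsetT)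
   ltac:(by apply: contraNneq W0 => h; rewrite -(setCK W) h setCT)
   ltac:(by rewrite (bigD1 [ffun=> true]) //= add1n) Ht
   ltac:(by rewrite cC; apply: arith4).
have Hd : forall d : 'F_p, d != 0 -> exists x, [/\ x \notin W, x - d \notin W, f x & ~~ f (x - d)].
  by move=> d d0; have [x [xC xdC fx fxd]] := Hf d d0; exists x; rewrite -!in_setC.
have [pc _ _ _] := @construct p W f W0 Hd.
do 2 eexists; split; first exact: pc.
by split; apply: subsetUr.
Qed.

Lemma t7 : exists U V : {set 'F_7},
  [/\ prime_compatible U V, (1%:R : 'F_7) \in U :\: V, (11%:R : 'F_7) \in U :\: V,
      (6%:R : 'F_7) \in V :\: U & #|U :&: V| = 2%nat].
Proof. apply: (@small_case 7 erefl [:: 1; 4]%nat 2 3); by vm_compute. Qed.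

Lemma t11 : exists U V : {set 'F_11},
  [/\ prime_compatible U V, (1%:R : 'F_11) \in U :\: V, (11%:R : 'F_11) \in U :\: V,
      (6%:R : 'F_11) \in V :\: U & #|U :&: V| = 2%nat].
Proof. apply: (@small_case 11 erefl [:: 0; 1; 3; 4; 9; 10]%nat 7 2); by vm_compute. Qed.

Lemma t13 : exists U V : {set 'F_13},
  [/\ prime_compatible U V, (1%:R : 'F_13) \in U :\: V, (11%:R : 'F_13) \in U :\: V,
      (6%:R : 'F_13) \in V :\: U & #|U :&: V| = 2%nat].
Proof. apply: (@small_case 13 erefl [:: 1; 4; 9; 10; 11]%nat 8 12); by vm_compute. Qed.

Lemma t17 : exists U V : {set 'F_17},
  [/\ prime_compatible U V, (1%:R : 'F_17) \in U :\: V, (11%:R : 'F_17) \in U :\: V,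
      (6%:R : 'F_17) \in V :\: U & #|U :&: V| = 2%nat].
Proof. apply: (@small_case 17 erefl [:: 1; 3; 11; 14]%nat 0 16); by vm_compute. Qed.

Lemma t19 : exists U V : {set 'F_19},
  [/\ prime_compatible U V, (1%:R : 'F_19) \in U :\: V, (11%:R : 'F_19) \in U :\: V,
      (6%:R : 'F_19) \in V :\: U & #|U :&: V| = 2%nat].
Proof. apply: (@small_case 19 erefl [:: 1; 2; 7; 10; 11]%nat 17 5); by vm_compute. Qed.

Lemma t23 : exists U V : {set 'F_23},
  [/\ prime_compatible U V, (1%:R : 'F_23) \in U :\: V, (11%:R : 'F_23) \in U :\: V,
      (6%:R : 'F_23) \in V :\: U & #|U :&: V| = 2%nat].
Proof. apply: (@small_case 23 erefl [:: 0; 1; 3; 5; 9; 11; 13; 15; 19; 21; 22]%nat 8 12); by vm_compute. Qed.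

Lemma t29 : exists U V : {set 'F_29},
  [/\ prime_compatible U V, (1%:R : 'F_29) \in U :\: V, (11%:R : 'F_29) \in U :\: V,
      (6%:R : 'F_29) \in V :\: U & #|U :&: V| = 2%nat].
Proof. apply: (@small_case 29 erefl [:: 0; 1; 2; 3; 8; 9; 11; 18; 22; 23; 26]%nat 15 14); by vm_compute. Qed.

Lemma t31 : exists U V : {set 'F_31},
  [/\ prime_compatible U V, (1%:R : 'F_31) \in U :\: V, (11%:R : 'F_31) \in U :\: V,
      (6%:R : 'F_31) \in V :\: U & #|U :&: V| = 2%nat].
Proof. apply: (@small_case 31 erefl [:: 1; 4; 5; 9; 11; 12; 13; 14; 18; 20; 21; 22; 29]%nat 26 19); by vm_compute. Qed.


Lemma partB (p : nat) : prime p -> leq 7 p ->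
     exists U V : {set 'F_p},
       [/\ prime_compatible U V,
           (1%:R : 'F_p) \in U :\: V, (11%:R : 'F_p) \in U :\: V,
           (6%:R : 'F_p) \in V :\: U & #|U :&: V| = 2%nat].
Proof.
move=> hp hp7.
case: (ltnP p 37) => hlt.
  have chk : all (fun q => prime q ==> (7 <= q)%nat ==>
      (q \in [:: 7; 11; 13; 17; 19; 23; 29; 31]%nat)) (iota 0 37) by vm_compute.
  have pin : p \in iota 0 37 by rewrite mem_iota.
  move/allP: chk => /(_ p pin); rewrite hp hp7 /= !inE.
  case/orP => [/eqP -> | ]; first exact: t7.
  case/orP => [/eqP -> | ]; first exact: t11.
  case/orP => [/eqP -> | ]; first exact: t13.
  case/orP => [/eqP -> | ]; first exact: t17.
  case/orP => [/eqP -> | ]; first exact: t19.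
  case/orP => [/eqP -> | ]; first exact: t23.
  case/orP => [/eqP -> | ]; first exact: t29.
  by move/eqP ->; exact: t31.
have lt a : (a <= 11 -> a < p)%nat by move=> h; apply: leq_ltn_trans h _; apply: leq_trans hlt.
have n12 := @neqF p hp _ _ (lt 1%nat isT) (lt 2%nat isT) isT.
have n13 := @neqF p hp _ _ (lt 1%nat isT) (lt 3%nat isT) isT.
have n112 := @neqF p hp _ _ (lt 11%nat isT) (lt 2%nat isT) isT.
have n113 := @neqF p hp _ _ (lt 11%nat isT) (lt 3%nat isT) isT.
have n62 := @neqF p hp _ _ (lt 6%nat isT) (lt 2%nat isT) isT.
have n63 := @neqF p hp _ _ (lt 6%nat isT) (lt 3%nat isT) isT.
have n61 := @neqF p hp _ _ (lt 6%nat isT) (lt 1%nat isT) isT.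
have n611 := @neqF p hp _ _ (lt 6%nat isT) (lt 11%nat isT) isT.
have n23 := @neqF p hp _ _ (lt 2%nat isT) (lt 3%nat isT) isT.
set W : {set 'F_p} := [set 2%:R; 3%:R].
set F : {set 'F_p} := 1%:R |: [set 6%:R; 11%:R].
set C := ~: (W :|: F).
pose R (f : {ffun 'F_p -> bool}) := [&& f 1%:R, f 11%:R & ~~ f 6%:R].
have F1 : (1%:R : 'F_p) \in F by rewrite !inE eqxx.
have F6 : (6%:R : 'F_p) \in F by rewrite !inE eqxx ?orbT.
have F11 : (11%:R : 'F_p) \in F by rewrite !inE eqxx ?orbT.
have HR : forall f g : {ffun 'F_p -> bool}, (forall z, z \in F -> f z = g z) -> R f = R g.
  by move=> f g fg; rewrite /R (fg _ F1) (fg _ F6) (fg _ F11).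
have CF : [disjoint C & F].
  rewrite disjoints_subset; apply/subsetP => z.
  by rewrite /C in_setC in_setU negb_or => /andP [_ zF]; rewrite in_setC.
have CT : C != setT.
  apply/negP => /eqP h; have : (2%:R : 'F_p) \in C by rewrite h inE.
  by rewrite /C in_setC in_setU !inE eqxx.
pose f0 : {ffun 'F_p -> bool} := [ffun z => (z == 1%:R) || (z == 11%:R)].
have R0 : (0 < \sum_(f : {ffun 'F_p -> bool}) R f)%nat.
  rewrite (bigD1 f0) //.
  have -> : R f0 = true.
    by rewrite /R /f0 !ffunE (negbTE n61) (negbTE n611) !eqxx orbT.
  by [].
have [t14 tp] := @arith5 p hlt.
have Ht : (p.-1 * expn 3 ((p - 9) %/ 2) < expn 4 ((p - 9) %/ 2))%nat.
  apply: leq_ltn_trans (@pow_bound _ t14); rewrite leq_mul2r; apply/orP; right; exact: tp.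
have cW : (#|W :|: F| <= 5)%nat.
  apply: leq_trans (leq_card_setU _ _) _.
  rewrite /W /F cards2 cardsU1 cards2.
  by case: (_ != _); case: (_ \notin _); case: (_ != _).
have cC : #|C| = (p - #|W :|: F|)%nat by rewrite cardsCs setCK card_Fp.
have [f [Rf Hf]] := @exists_good p hp R F C ((p - 9) %/ 2)%nat HR CF CT R0 Ht
   (@arith6 p _ _ hlt cW cC).
have W0 : W != set0 by apply/set0Pn; exists 2%:R; rewrite !inE eqxx.
have Hd : forall d : 'F_p, d != 0 -> exists x, [/\ x \notin W, x - d \notin W, f x & ~~ f (x - d)].
  move=> d d0; have [x [xC xdC fx fxd]] := Hf d d0; exists x; split => //.
    by move: xC; rewrite /C in_setC in_setU negb_or => /andP[].
  by move: xdC; rewrite /C in_setC in_setU negb_or => /andP[].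
have [pc e1 e2 eI] := @construct p W f W0 Hd.
move: Rf; rewrite /R => /and3P[f1 f11 f6].
do 2 eexists; split; first exact: pc.
- by rewrite e1 inE f1 !inE negb_or n12 n13.
- by rewrite e1 inE f11 !inE negb_or n112 n113.
- by rewrite e2 inE f6 !inE negb_or n62 n63.
- by rewrite eI cards2 n23.
Qed.

Theorem mainTheorem4 :
  (forall (p : nat) (W : {set 'F_p}), prime p -> W != set0 ->
     Rlt (INR #|W|) (Rminus (Rdiv (Rminus (INR p) (IZR 1)) (IZR 2)) (Rdiv (ln (INR p)) (ln (Rdiv (IZR 4) (IZR 3))))) ->
     exists U V : {set 'F_p},
       prime_compatible U V /\ W \subset U /\ W \subset V) /\
  (forall p : nat, prime p -> leq 7 p ->
     exists U V : {set 'F_p},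
       [/\ prime_compatible U V,
           (1%:R : 'F_p) \in U :\: V, (11%:R : 'F_p) \in U :\: V,
           (6%:R : 'F_p) \in V :\: U & #|U :&: V| = 2%nat]).
Proof.
split; [exact: partA | exact: partB].
Qed.
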